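(* Let $A \in \mathbb{R}^{n \times r}$ and $B \in \mathbb{R}^{r \times n}$ be matrices of rank $n$. The following are equivalent: (i) $\sigma(\ker(A)) \cap \sigma(\mathrm{im}(B)) = \{0\}$; (ii) for all $J\subseteq [r]$ of cardinality $n$, the product $\det(A_{[n],J})\det(B_{J,[n]})$ either is zero or has the same sign as all other nonzero such products, and at least one such product is nonzero.
   Context: $[n]=\{1,\dots,n\}$; $A_{[n],J}$ is the submatrix of $A$ with columns in $J$, $B_{J,[n]}$ the submatrix of $B$ with rows in $J$. $\sigma$ is the componentwise sign vector in $\{-,0,+\}^r$, $\sigma(T)=\{\sigma(x)\mid x\in T\}$, and $0$ denotes the zero sign vector. *)

(* Defs.v *)
From HB Require Import structures.
From mathcomp Require Import all_boot all_order all_algebra.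
Set Implicit Arguments. Unset Strict Implicit. Unset Printing Implicit Defensive.
Import Order.TTheory GRing.Theory Num.Theory.
Local Open Scope ring_scope.

(* Componentwise sign vector of a column vector x in R^r, with values in
   {-1,0,1} (encoding {-,0,+}). *)
Definition sgvec (R : realDomainType) (r : nat) (x : 'cV[R]_r) : {ffun 'I_r -> int} :=
  [ffun i => sgz (x i ord0)].

Definition sgvec0 (r : nat) : {ffun 'I_r -> int} := [ffun _ => 0%R].

Definition sg_ker (R : realDomainType) (n r : nat) (A : 'M[R]_(n, r)) :
  {ffun 'I_r -> int} -> Prop :=
  fun s => exists x : 'cV[R]_r, A *m x = 0 /\ sgvec x = s.

Definition sg_im (R : realDomainType) (n r : nat) (B : 'M[R]_(r, n)) :
  {ffun 'I_r -> int} -> Prop :=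
  fun s => exists y : 'cV[R]_n, sgvec (B *m y) = s.

Definition idxJ (n r : nat) (J : {set 'I_r}) (HJ : #|J| = n) : 'I_n -> 'I_r :=
  fun k => enum_val (cast_ord (esym HJ) k).

Definition JProd (R : comNzRingType) (n r : nat) (A : 'M[R]_(n, r)) (B : 'M[R]_(r, n))
  (J : {set 'I_r}) (HJ : #|J| = n) : R :=
  \det (colsub (idxJ HJ) A) * \det (rowsub (idxJ HJ) B).

(* Main.v *)
Require Import Defs.
From HB Require Import structures.
From mathcomp Require Import all_boot all_order all_algebra.
From mathcomp Require Import all_fingroup.
From mathcomp Require Import ring lra.
Import Order.TTheory GRing.Theory Num.Theory.
Local Open Scope ring_scope.

Section CB.
Context {R : comNzRingType} {n r : nat}.

Definition JP (A : 'M[R]_(n, r)) (B : 'M[R]_(r, n)) (J : {set 'I_r}) : R :=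
  match #|J| =P n with ReflectT H => JProd A B H | ReflectF _ => 0 end.

Lemma JPE (A : 'M[R]_(n, r)) (B : 'M[R]_(r, n)) (J : {set 'I_r}) (H : #|J| = n) : JP A B J = JProd A B H.
Proof.
rewrite /JP; case: eqP => [H'|]; first by rewrite (eq_irrelevance H' H).
by rewrite H.
Qed.

Lemma JP0 (A : 'M[R]_(n, r)) (B : 'M[R]_(r, n)) (J : {set 'I_r}) : #|J| != n -> JP A B J = 0.
Proof. by rewrite /JP; case: eqP. Qed.

Lemma det_mul_expand (A : 'M[R]_(n, r)) (B : 'M[R]_(r, n)) :
  \det (A *m B) = \sum_(f : {ffun 'I_n -> 'I_r})
     (\prod_i A i (f i)) * \det (rowsub f B).
Proof.
rewrite [in LHS]/determinant.
transitivity (\sum_(s : 'S_n) \sum_(f : {ffun 'I_n -> 'I_r})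
   (-1) ^+ s * \prod_i (A i (f i) * B (f i) (s i))).
  apply: eq_bigr => s _; rewrite -big_distrr /=; congr (_ * _).
  rewrite -(bigA_distr_bigA (fun i k => A i k * B k (s i))) /=.
  by apply: eq_bigr => i _; rewrite mxE.
rewrite exchange_big; apply: eq_bigr => f _ /=.
rewrite /determinant big_distrr /=; apply: eq_bigr => s _.
rewrite big_split /= mulrCA; congr (_ * (_ * _)).
by apply: eq_bigr => i _; rewrite mxE.
Qed.

Lemma det_noninj (B : 'M[R]_(r, n)) (f : 'I_n -> 'I_r) :
  ~~ injectiveb f -> \det (rowsub f B) = 0.
Proof.
case/injectivePn => i1 [i2 Di12 Ef12].
by apply: (determinant_alternate Di12) => j; rewrite !mxE Ef12.
Qed.

Definition predJ := [pred J : {set 'I_r} | #|J| == n].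
Definition SJ := {J in predJ}.
Definition HJ (J : SJ) : #|val J| = n := eqP (valP J : #|val J| == n).
Definition gJ (J : SJ) : 'I_n -> 'I_r := idxJ (HJ J).
Definition phi (p : SJ * 'S_n) : {ffun 'I_n -> 'I_r} := [ffun i => gJ p.1 (p.2 i)].

Lemma gJ_inj (J : SJ) : injective (gJ J).
Proof. by move=> i j /enum_val_inj /cast_ord_inj. Qed.

Lemma gJ_in (J : SJ) i : gJ J i \in val J.
Proof. exact: enum_valP. Qed.

Lemma gJ_onto (J : SJ) j : j \in val J -> exists i, gJ J i = j.
Proof.
move=> jJ; exists (cast_ord (HJ J) (enum_rank_in jJ j)).
by rewrite /gJ /idxJ cast_ordK enum_rankK_in.
Qed.

Lemma phi_img (p : SJ * 'S_n) : [set phi p i | i : 'I_n] = val p.1.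
Proof.
apply/setP => j; apply/imsetP/idP => [[i _ ->]|jJ]; first by rewrite ffunE gJ_in.
have [k <-] := @gJ_onto p.1 j jJ; exists (p.2^-1 k)%g => //; by rewrite ffunE permKV.
Qed.

Lemma phi_inj : injective phi.
Proof.
move=> [J s] [J' s'] E.
have h1 := phi_img (J, s); have h2 := phi_img (J', s').
rewrite E h2 /= in h1.
have EJ : J = J' by apply: val_inj.
subst J'; congr (_, _); apply/permP => i.
by move/ffunP: E => /(_ i); rewrite !ffunE => /gJ_inj.
Qed.

Lemma phi_injb (p : SJ * 'S_n) : injectiveb (phi p).
Proof. by apply/injectiveP => i j; rewrite !ffunE => /gJ_inj /perm_inj. Qed.

Lemma phi_onto : phi @: setT = [set f : {ffun 'I_n -> 'I_r} | injectiveb f].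
Proof.
apply/eqP; rewrite eqEcard; apply/andP; split.
  by apply/subsetP => f /imsetP [p _ ->]; rewrite inE phi_injb.
rewrite card_inj_ffuns card_imset; last exact: phi_inj.
rewrite cardsT card_prod card_sig card_Sn !card_ord.
have -> : #|[pred x | x \in predJ]| = 'C(r, n).
  rewrite -[in RHS](card_ord r) -(card_draws 'I_r n) -cardsE.
  by apply: eq_card => J; rewrite !inE.
by rewrite bin_ffact.
Qed.

Lemma cauchy_binet (A : 'M[R]_(n, r)) (B : 'M[R]_(r, n)) :
  \det (A *m B) = \sum_(J : {set 'I_r}) JP A B J.
Proof.
rewrite det_mul_expand (bigID (fun f : {ffun _} => injectiveb f)) /=.
rewrite [X in _ + X]big1 ?addr0; last by move=> f /det_noninj ->; rewrite mulr0.
transitivity (\sum_(f in phi @: setT) (\prod_i A i (f i)) * \det (rowsub f B)).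
  by apply: eq_bigl => f; rewrite phi_onto inE.
rewrite big_imset /=; last by move=> p q _ _; apply: phi_inj.
transitivity (\sum_(J : SJ) \sum_(s : 'S_n)
    (\prod_i A i (phi (J, s) i)) * \det (rowsub (phi (J, s)) B)).
  by rewrite pair_bigA; apply: eq_bigl => p; rewrite inE; case: p.
rewrite [in RHS](bigID (fun J : {set 'I_r} => #|J| == n)) /= [X in _ + X]big1 ?addr0; last first.
  by move=> J /JP0.
rewrite (big_sub predJ) /=; apply: eq_bigr => J _.
rewrite (JPE A B (val J) (HJ J)) /JProd.
have Edet s : \det (rowsub (phi (J, s)) B) = (-1) ^+ s * \det (rowsub (gJ J) B).
  have -> : rowsub (phi (J, s)) B = row_perm s (rowsub (gJ J) B).
    by apply/matrixP => i j; rewrite !mxE ffunE.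
  by rewrite row_permE det_mulmx det_perm.
transitivity (\sum_(s : 'S_n) ((-1) ^+ s * \prod_i A i (gJ J (s i))) * \det (rowsub (gJ J) B)).
  apply: eq_bigr => s _; rewrite Edet mulrCA mulrA; congr (_ * _ * _).
  by apply: eq_bigr => i _; rewrite ffunE.
rewrite -big_distrl /=; congr (_ * _).
rewrite /determinant; apply: eq_bigr => s _; congr (_ * _).
by apply: eq_bigr => i _; rewrite mxE.
Qed.

End CB.

Lemma cb_weighted (R : comNzRingType) n r (A : 'M[R]_(n, r)) (B : 'M[R]_(r, n)) (d : 'I_r -> R) :
  \det (A *m diag_mx (\row_j d j) *m B) = \sum_(J : {set 'I_r}) JP A B J * \prod_(j in J) d j.
Proof.
rewrite cauchy_binet; apply: eq_bigr => J _.
case: (#|J| =P n) => [H|/eqP H]; last by rewrite !JP0 ?mul0r.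
rewrite !(JPE _ _ _ H) /JProd.
have -> : colsub (idxJ H) (A *m diag_mx (\row_j d j)) =
          colsub (idxJ H) A *m diag_mx (\row_k d (idxJ H k)).
  by apply/matrixP => i k; rewrite !mul_mx_diag !mxE.
rewrite det_mulmx det_diag mulrAC; congr (_ * _).
rewrite (big_enum_val (fun j => d j)) /=.
rewrite (reindex (cast_ord (esym H))) /=; last first.
  by exists (cast_ord H) => k _; [apply: cast_ordKV | apply: cast_ordK].
by apply: eq_bigr => k _; rewrite mxE.
Qed.

Section Real.
Context {R : realFieldType} {r : nat}.

Definition upd (d : 'I_r -> R) j t := fun i => if i == j then t else d i.
Definition posv (d : 'I_r -> R) := forall j, 0 < d j.

Lemma affine_root (a b t0 t1 : R) : 0 < t0 -> 0 < t1 ->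
  (a + b * t0) * (a + b * t1) < 0 -> exists2 u, 0 < u & a + b * u = 0.
Proof.
move=> h0 h1 h.
have bn0 : b != 0.
  by apply/eqP => b0; move: h; rewrite b0 !mul0r !addr0 -expr2 ltNge sqr_ge0.
have ha : a = - (b * (- a / b)) by rewrite mulrCA mulfV // mulr1 opprK.
exists (- a / b); last by rewrite {1}ha addNr.
move: h; rewrite {1 2}ha; set u := - a / b => h.
rewrite ltNge; apply/negP => hu.
have E : (- (b * u) + b * t0) * (- (b * u) + b * t1) = (b * b) * ((t0 - u) * (t1 - u)) by ring.
move: h; rewrite E ltNge => /negP; apply.
apply: mulr_ge0; first by rewrite -expr2 sqr_ge0.
apply: mulr_ge0; rewrite subr_ge0; apply: le_trans hu _; exact: ltW.
Qed.

Lemma root_path {f : (('I_r -> R) -> R)} (fext : forall d d', d =1 d' -> f d = f d')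
  (faff : forall d j, exists a b, forall t, f (upd d j t) = a + b * t) {p q} :
  posv p -> posv q -> f p * f q < 0 -> exists2 d, posv d & f d = 0.
Proof.
move=> pp pq.
suff H : forall k p, posv p -> (forall j : 'I_r, (k <= j)%N -> p j = q j) ->
    f p * f q < 0 -> exists2 d, posv d & f d = 0.
  by apply: (H r p pp) => j; rewrite leqNgt ltn_ord.
elim=> [|k IH] {}p {}pp hpq hlt.
  have e : f p = f q by apply: fext => j; apply: hpq.
  by move: hlt; rewrite e -expr2 ltNge sqr_ge0.
case: (ltnP k r) => [kr|rk]; last first.
  apply: (IH p pp) => // j; by rewrite leqNgt (leq_trans (ltn_ord j) rk).
pose kk := Ordinal kr.
pose p' := upd p kk (q kk).
have pp' : posv p' by move=> j; rewrite /p' /upd; case: eqP => _; [exact: pq|exact: pp].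
have hp'q : forall j : 'I_r, (k <= j)%N -> p' j = q j.
  move=> j hj; rewrite /p' /upd; case: eqP => [->//|/eqP hne]; apply: hpq.
  rewrite ltn_neqAle hj andbT; apply: contra hne => /eqP e.
  by apply/eqP; apply: val_inj; rewrite /= -e.
have [hlt'|hge] := ltrP (f p' * f q) 0; first exact: (IH p' pp' hp'q hlt').
have [hz|hnz] := eqVneq (f p') 0; first by exists p'.
have hpp' : f p * f p' < 0.
  have hq0 : f q != 0 by apply/eqP => e; move: hlt; rewrite e mulr0 ltxx.
  have hpos : 0 < f p' * f q by rewrite lt_def mulf_neq0.
  have E : (f p * f p') * (f p' * f q) = (f p * f q) * (f p' * f p') by ring.
  have : (f p * f q) * (f p' * f p') < 0.
    by rewrite nmulr_rlt0 // -expr2 lt_def sqrf_eq0 hnz sqr_ge0.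
  by rewrite -E pmulr_llt0.
have [a [b hab]] := faff p kk.
have e0 : f p = a + b * p kk.
  by rewrite -hab; apply: fext => j; rewrite /upd; case: eqP => // ->.
have e1 : f p' = a + b * q kk by rewrite -hab.
rewrite e0 e1 in hpp'.
have [u hu hu0] := @affine_root a b _ _ (pp kk) (pq kk) hpp' : exists2 u : R, 0 < u & a + b * u = 0.
exists (upd p kk u); first by move=> j; rewrite /upd; case: eqP.
by rewrite hab.
Qed.

Variable (n : nat) (c : {set 'I_r} -> R).
Hypothesis hc : forall J : {set 'I_r}, #|J| != n -> c J = 0.

Definition F (d : 'I_r -> R) := \sum_(J : {set 'I_r}) c J * \prod_(j in J) d j.

Lemma F_ext d d' : d =1 d' -> F d = F d'.
Proof.
by move=> e; apply: eq_bigr => J _; congr (_ * _); apply: eq_bigr => j _; rewrite e.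
Qed.

Lemma F_aff d j0 : exists a b, forall t, F (upd d j0 t) = a + b * t.
Proof.
exists (\sum_(J : {set 'I_r}) (if j0 \in J then 0 else c J * \prod_(j in J) d j)).
exists (\sum_(J : {set 'I_r}) (if j0 \in J then c J * \prod_(j in J :\ j0) d j else 0)).
move=> t; rewrite /F big_distrl /= -big_split /=; apply: eq_bigr => J _.
case: ifP => hJ.
  rewrite (bigD1 j0 hJ) /= {1}/upd eqxx add0r.
rewrite mulrCA [RHS]mulrC; congr (_ * (_ * _)).
  apply: eq_big => [i|i]; first by rewrite !inE andbC.
  by rewrite /upd; case: eqP => //= _; rewrite andbF.
rewrite mul0r addr0; congr (_ * _); apply: eq_bigr => i hi; rewrite /upd.
by case: eqP => // e; move: hJ; rewrite -e hi.
Qed.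

Lemma F_pos_nonzero
  (hsg : forall J1 J2, c J1 != 0 -> c J2 != 0 -> Num.sg (c J1) = Num.sg (c J2))
  J0 (h0 : c J0 != 0) d : posv d -> F d != 0.
Proof.
move=> pd.
have key : 0 < Num.sg (c J0) * F d.
  rewrite /F big_distrr /= (bigD1 J0) //=.
  have t0 : 0 < Num.sg (c J0) * (c J0 * \prod_(j in J0) d j).
    rewrite mulrA -normrEsg mulr_gt0 ?normr_gt0 //; apply: prodr_gt0 => j _; exact: pd.
  have t1 : 0 <= \sum_(J | J != J0) Num.sg (c J0) * (c J * \prod_(j in J) d j).
    apply: sumr_ge0 => J _; have [->|hJ] := eqVneq (c J) 0; first by rewrite mul0r mulr0.
    rewrite (hsg J0 J h0 hJ) mulrA -normrEsg mulr_ge0 ?normr_ge0 //.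
    by apply/ltW/prodr_gt0 => j _; exact: pd.
  lra.
by apply/eqP => e; move: key; rewrite e mulr0 ltxx.
Qed.

Lemma F_eps J1 : c J1 != 0 -> exists2 p, posv p & 0 < c J1 * F p.
Proof.
move=> h1.
have hn : #|J1| = n by apply/eqP; apply/negPn/negP => /hc e; move: h1; rewrite e eqxx.
pose a : R := `|c J1|.
have ha : 0 < a by rewrite normr_gt0.
pose S : R := \sum_J `|c J|.
have hS : a <= S by rewrite /S (bigD1 J1) //= lerDl sumr_ge0 // => J _.
have Spos : 0 < S by apply: lt_le_trans hS.
pose e : R := a / (2 * S).
have e0 : 0 < e by rewrite /e divr_gt0 // mulr_gt0.
have e1 : e <= 1 by rewrite /e ler_pdivrMr ?mulr_gt0 // mul1r; lra.
have eS : e * S = a / 2.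
  by rewrite /e invfM mulrA mulfVK // lt0r_neq0.
pose p j := if j \in J1 then 1 else e.
have pp : posv p by move=> j; rewrite /p; case: ifP.
exists p => //.
rewrite /F (bigD1 J1) //=.
have P1 : \prod_(j in J1) p j = 1 by apply: big1 => j hj; rewrite /p hj.
rewrite P1 mulr1.
set rest := \sum_(J | J != J1) c J * \prod_(j in J) p j.
have hrest : `|rest| <= e * S.
  apply: le_trans (ler_norm_sum _ _ _) _.
  apply: le_trans (_ : _ <= \sum_(J | J != J1) e * `|c J|) _.
    apply: ler_sum => J hJ; rewrite normrM mulrC.
    have [hJn|/hc ->] := eqVneq #|J| n; last by rewrite normr0 !mulr0.
    apply: ler_wpM2r; first exact: normr_ge0.
    have hsub : ~~ (J \subset J1).
      by apply/negP => hs; move: hJ; rewrite eqEcard hs hn hJn leqnn.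
    case/subsetPn: hsub => j jJ jnJ1.
    rewrite ger0_norm; last by apply/ltW/prodr_gt0 => i _; exact: pp.
    rewrite (bigD1 j jJ) /= {1}/p (negPf jnJ1).
    rewrite -[X in _ <= X]mulr1; apply: (ler_wpM2l (ltW e0)).
    apply: prodr_ile1 => i _; apply/andP; split; first exact: ltW (pp i).
    by rewrite /p; case: ifP.
  rewrite -big_distrr /=; apply: (ler_wpM2l (ltW e0)).
  by rewrite /S [X in _ <= X](bigD1 J1) //= lerDr.
rewrite eS in hrest.
have /andP[hl _] : - `|c J1 * rest| <= c J1 * rest <= `|c J1 * rest| by rewrite -ler_norml.
rewrite normrM -/a in hl.
have hcc : c J1 * c J1 = a * a by rewrite /a -normrM ger0_norm // -expr2 sqr_ge0.
have : a * `|rest| <= a * (a / 2) by rewrite ler_wpM2l // ltW.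
nra.
Qed.

Lemma F_nonvan_ii : (forall d, posv d -> F d != 0) ->
  (forall J1 J2, c J1 != 0 -> c J2 != 0 -> Num.sg (c J1) = Num.sg (c J2))
  /\ exists J, c J != 0.
Proof.
move=> H; split.
  move=> J1 J2 h1 h2; apply/eqP; rewrite -[_ == _]negbK; apply/negP => hne.
  have hprod : c J1 * c J2 < 0.
    have [g1|l1|e1] := ltrgt0P (c J1); last by move: h1; rewrite e1 eqxx.
      have [g2|l2|e2] := ltrgt0P (c J2); last by move: h2; rewrite e2 eqxx.
        by move: hne; rewrite (gtr0_sg g1) (gtr0_sg g2) eqxx.
      by rewrite pmulr_rlt0.
    have [g2|l2|e2] := ltrgt0P (c J2); last by move: h2; rewrite e2 eqxx.
      by rewrite nmulr_rlt0.
    by move: hne; rewrite (ltr0_sg l1) (ltr0_sg l2) eqxx.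
  have [p pp hp] := F_eps J1 h1; have [q pq hq] := F_eps J2 h2.
  have hFF : F p * F q < 0.
    have : 0 < (c J1 * F p) * (c J2 * F q) by rewrite mulr_gt0.
    have -> : (c J1 * F p) * (c J2 * F q) = (c J1 * c J2) * (F p * F q) by ring.
    by rewrite nmulr_rgt0.
  have [d pd hd] := root_path F_ext F_aff pp pq hFF.
  by move: (H d pd); rewrite hd eqxx.
have [J hJ|h0] := pickP (fun J => c J != 0); first by exists J.
move: (H (fun _ => 1) (fun _ => ltr01)); rewrite /F big1 ?eqxx // => J _.
by move/negbFE: (h0 J) => /eqP ->; rewrite mul0r.
Qed.
End Real.

Section Signs.
Context {R : realFieldType} {n r : nat} (A : 'M[R]_(n, r)) (B : 'M[R]_(r, n)).
Hypothesis hB : \rank B = n.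

Lemma Binj (y : 'cV[R]_n) : B *m y = 0 -> y = 0.
Proof.
have rf : row_free B^T by rewrite /row_free mxrank_tr hB.
move=> e; apply: trmx_inj; rewrite trmx0; apply: (row_free_inj rf) => /=.
by rewrite mul0mx -trmx_mul e trmx0.
Qed.

Lemma sgvec0E (z : 'cV[R]_r) : sgvec z = sgvec0 r -> z = 0.
Proof.
move=> e; apply/matrixP => i j; rewrite (ord1 j) mxE.
by move/ffunP: e => /(_ i); rewrite !ffunE => /eqP; rewrite sgz_eq0 => /eqP.
Qed.

Lemma sgvec_zero : sgvec (0 : 'cV[R]_r) = sgvec0 r.
Proof. by apply/ffunP => i; rewrite !ffunE mxE sgz0. Qed.

Lemma sgvec_diag (d : 'I_r -> R) (z : 'cV[R]_r) : posv d ->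
  sgvec (diag_mx (\row_j d j) *m z) = sgvec z.
Proof.
by move=> pd; apply/ffunP => i; rewrite !ffunE mul_diag_mx !mxE sgzM gtr0_sgz ?mul1r.
Qed.

Lemma signs_iff :
  (forall s : {ffun 'I_r -> int}, (sg_ker A s /\ sg_im B s) <-> s = sgvec0 r) <->
  (forall d, posv d -> \det (A *m diag_mx (\row_j d j) *m B) != 0).
Proof.
split.
  move=> Hi d pd; apply/negP; rewrite -det_tr => /det0P [v vn0 hv].
  pose M := A *m diag_mx (\row_j d j) *m B.
  have My : M *m v^T = 0 by rewrite -[M]trmxK -trmx_mul hv trmx0.
  pose x := diag_mx (\row_j d j) *m (B *m v^T).
  have Ax : A *m x = 0 by rewrite /x !mulmxA.
  have sx : sgvec x = sgvec0 r.
    apply/(Hi (sgvec x)); split; first by exists x.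
    by exists v^T; rewrite /x sgvec_diag.
  have := sx; rewrite /x sgvec_diag // => /sgvec0E /Binj /eqP.
  by rewrite -trmx0 (inj_eq trmx_inj) (negPf vn0).
move=> Hd s; split; last first.
  by move=> ->; split; exists 0; rewrite mulmx0 sgvec_zero.
move=> [[x [Ax sx]] [y sy]].
pose z := B *m y.
have hxz i : sgz (x i 0) = sgz (z i 0).
  by move/ffunP: sx => /(_ i); move/ffunP: sy => /(_ i); rewrite !ffunE => -> ->.
pose d i := if z i 0 == 0 then 1 else x i 0 / z i 0.
have pd : posv d.
  move=> i; rewrite /d; case: eqP => // /eqP zn0.
  have [g|l|e] := ltrgt0P (z i 0); last by move: zn0; rewrite e eqxx.
    have : 0 < sgz (x i 0) by rewrite hxz gtr0_sgz.
    by rewrite sgz_gt0 => xp; rewrite divr_gt0.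
  have : sgz (x i 0) < 0 by rewrite hxz ltr0_sgz.
  by rewrite sgz_lt0 => xn; rewrite nmulr_rgt0 // invr_lt0.
have Dz : diag_mx (\row_j d j) *m z = x.
  apply/matrixP => i j; rewrite (ord1 j) mul_diag_mx mxE [X in X * _]mxE /d.
  case: eqP => [z0|/eqP zn0]; last by rewrite divfK.
  move: (hxz i); rewrite z0 sgz0 => /eqP; rewrite sgz_eq0 => /eqP ->.
  by rewrite mulr0.
have My : (A *m diag_mx (\row_j d j) *m B) *m y = 0.
  by rewrite -!mulmxA -/z Dz.
have un : (A *m diag_mx (\row_j d j) *m B) \in unitmx by rewrite unitmxE unitfE Hd.
have y0 : y = 0 by rewrite -(mulKmx un y) My mulmx0.
by rewrite -sy y0 mulmx0 sgvec_zero.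
Qed.

End Signs.

Theorem mainTheorem15 (R : realFieldType) (n r : nat)
  (A : 'M[R]_(n, r)) (B : 'M[R]_(r, n))
  (hA : \rank A = n) (hB : \rank B = n) :
  (forall s : {ffun 'I_r -> int}, (sg_ker A s /\ sg_im B s) <-> s = sgvec0 r)
  <->
  ((forall (J1 J2 : {set 'I_r}) (H1 : #|J1| = n) (H2 : #|J2| = n),
      JProd A B H1 != 0 -> JProd A B H2 != 0 ->
      Num.sg (JProd A B H1) = Num.sg (JProd A B H2))
   /\ exists (J : {set 'I_r}) (H : #|J| = n), JProd A B H != 0).
Proof.
have hc : forall J : {set 'I_r}, #|J| != n -> JP A B J = 0 by move=> J; apply: JP0.
have hn J : JP A B J != 0 -> #|J| = n.
  by move=> h; apply/eqP; apply/negPn/negP => /hc e; move: h; rewrite e eqxx.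
rewrite (signs_iff A B hB).
split.
  move=> Hd.
  have HF : forall d, posv d -> F (JP A B) d != 0.
    by move=> d pd; rewrite /F -cb_weighted; exact: Hd.
  have [Hs [J HJ]] := F_nonvan_ii n (JP A B) hc HF.
  split.
    move=> J1 J2 H1 H2; rewrite -(JPE A B J1 H1) -(JPE A B J2 H2); exact: Hs.
  by exists J, (hn J HJ); rewrite -JPE.
move=> [Hs [J [H HJ]]] d pd.
rewrite cb_weighted; apply: (@F_pos_nonzero _ _ (JP A B) _ J) => //.
  move=> J1 J2 h1 h2.
  have e1 := JPE A B J1 (hn J1 h1); have e2 := JPE A B J2 (hn J2 h2).
  rewrite e1 e2; apply: Hs; by rewrite -?e1 -?e2.
by rewrite (JPE A B J H).
Qed.
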